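(* Let $\Phi=(G,\varphi)$ be a $\mathbb{T}$-gain graph on a connected graph $G$ with maximum vertex degree $\Delta$. Then $\rho(A(\Phi))=\Delta$ if and only if $G$ is $\Delta$-regular and either $\Phi$ or $-\Phi$ is balanced.
   Context: Graphs are finite, simple and undirected. $\mathbb{T}=\{z\in\mathbb{C}:|z|=1\}$. A $\mathbb{T}$-gain on $G$ is a map $\varphi$ from oriented edges to $\mathbb{T}$ with $\varphi(\overrightarrow{e_{ts}})=\varphi(\overrightarrow{e_{st}})^{-1}$; $A(\Phi)$ is the Hermitian matrix with $(s,t)$ entry $\varphi(\overrightarrow{e_{st}})$ if $v_s\sim v_t$, else $0$; $\rho$ is the spectral radius. $-\Phi$ denotes the gain graph $(G,-\varphi)$. The gain of a directed cycle is the product of the gains of its oriented edges; $\Phi$ is balanced if every directed cycle has gain $1$. *)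

(* Defs.v *)
From HB Require Import structures.
From mathcomp Require Import all_boot all_order all_algebra.
Set Implicit Arguments. Unset Strict Implicit. Unset Printing Implicit Defensive.
Import Order.TTheory GRing.Theory Num.Theory.
Local Open Scope ring_scope.

Definition simple_graph (n : nat) (e : rel 'I_n) : Prop :=
  (forall i j, e i j = e j i) /\ (forall i, ~~ e i i).

Definition connected_graph (n : nat) (e : rel 'I_n) : Prop :=
  (0 < n)%N /\ forall i j, connect e i j.

Definition deg (n : nat) (e : rel 'I_n) (i : 'I_n) : nat := #|[pred j | e i j]|.

Definition max_deg (n : nat) (e : rel 'I_n) : nat := (\max_(i < n) deg e i)%N.

Definition regular (n : nat) (e : rel 'I_n) (k : nat) : Prop :=
  forall i, deg e i = k.

(* phi i j = gain of the oriented edge from v_i to v_j (only relevant on edges). *)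
Definition T_gain (C : numClosedFieldType) (n : nat) (e : rel 'I_n)
  (phi : 'I_n -> 'I_n -> C) : Prop :=
  forall i j, e i j -> `|phi i j| = 1 /\ phi j i = (phi i j)^-1.

Definition gain_adj (C : numClosedFieldType) (n : nat) (e : rel 'I_n)
  (phi : 'I_n -> 'I_n -> C) : 'M[C]_n :=
  \matrix_(i, j) (if e i j then phi i j else 0).

Definition directed_cycle (n : nat) (e : rel 'I_n) (c : seq 'I_n) : bool :=
  [&& (2 < size c)%N, uniq c & cycle e c].

Definition cycle_gain (C : numClosedFieldType) (n : nat)
  (phi : 'I_n -> 'I_n -> C) (c : seq 'I_n) : C :=
  \prod_(p <- zip c (rot 1 c)) phi p.1 p.2.

Definition balanced (C : numClosedFieldType) (n : nat) (e : rel 'I_n)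
  (phi : 'I_n -> 'I_n -> C) : Prop :=
  forall c, directed_cycle e c -> cycle_gain phi c = 1.

Definition spectral_radius_is (C : numClosedFieldType) (n : nat)
  (A : 'M[C]_n) (r : C) : Prop :=
  (exists2 l, eigenvalue A l & `|l| = r) /\
  (forall l, eigenvalue A l -> `|l| <= r).

(* Main.v *)
Require Import Defs.
From HB Require Import structures.
From mathcomp Require Import all_boot all_order all_algebra.
From mathcomp Require Import ring zify.
Set Implicit Arguments. Unset Strict Implicit. Unset Printing Implicit Defensive.
Import Order.TTheory GRing.Theory Num.Theory.
Local Open Scope ring_scope.

Section Pot.
Variables (C : numClosedFieldType) (n : nat).
Implicit Types (psi : 'I_n -> 'I_n -> C) (x y : 'I_n) (s : seq 'I_n).

Fixpoint pp psi x s : C :=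
  if s is y :: s' then psi x y * pp psi y s' else 1.

Lemma pp_rcons psi x s y : pp psi x (rcons s y) = pp psi x s * psi (last x s) y.
Proof. by elim: s x => [|z s IH] x /=; rewrite ?mulr1 ?mul1r // IH mulrA. Qed.

Lemma zip_pp psi x s y :
  \prod_(p <- zip (x :: s) (rcons s y)) psi p.1 p.2 = pp psi x (rcons s y).
Proof.
elim: s x => [|z s IH] x /=; first by rewrite big_cons big_nil.
by rewrite big_cons IH.
Qed.

Lemma cycle_gain_pp psi x s : cycle_gain psi (x :: s) = pp psi x (rcons s x).
Proof. by rewrite /cycle_gain rot1_cons zip_pp. Qed.

Lemma pp_tele psi (r : rel 'I_n) (f : 'I_n -> C) :
  (forall a, f a != 0) -> (forall a b, r a b -> psi a b = f b / f a) ->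
  forall x s, path r x s -> pp psi x s = f (last x s) / f x.
Proof.
move=> fnz hr x s; elim: s x => [|y s IH] x /=; first by rewrite divff.
case/andP=> hxy hp; rewrite IH // hr //.
by field; rewrite ?fnz.
Qed.

Lemma bal_of_pot (e : rel 'I_n) psi (f : 'I_n -> C) :
  (forall a, f a != 0) -> (forall a b, e a b -> psi a b = f b / f a) ->
  balanced e psi.
Proof.
move=> fnz hr [|x s] /andP[_ /andP[_ hc]] //.
by rewrite cycle_gain_pp (pp_tele fnz hr hc) last_rcons divff.
Qed.

Lemma path_all_tgt (r : rel 'I_n) (P : pred 'I_n) x s :
  (forall a b, r a b -> P b) -> path r x s -> all P s.
Proof.
move=> hr; elim: s x => //= y s IH x /andP[rxy hp].
by rewrite (hr _ _ rxy) (IH y hp).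
Qed.

Lemma pot_of_bal (e : rel 'I_n) psi :
  simple_graph e -> connected_graph e ->
  (forall a b, e a b -> psi a b != 0 /\ psi b a = (psi a b)^-1) ->
  balanced e psi ->
  exists f : 'I_n -> C, (forall a, f a != 0) /\
     (forall a b, e a b -> psi a b = f b / f a).
Proof.
case=> esym eirr [n0 econ] hpsi bal.
pose r := Ordinal n0.
pose rS (S : {set 'I_n}) := [rel a b | [&& e a b, a \in S & b \in S]].
have symS S : symmetric (rS S).
  by move=> x y /=; rewrite esym; case: (x \in S); case: (y \in S).
have main : forall m, (m < n)%N -> exists S : {set 'I_n}, exists f : 'I_n -> C,
  [/\ #|S| = m.+1, r \in S, (forall a, a \in S -> connect (rS S) r a),
     (forall a, f a != 0) &
     (forall a b, a \in S -> b \in S -> e a b -> psi a b = f b / f a)].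
  elim=> [|m IH] hm.
    exists [set r], (fun _ => 1); split.
    - by rewrite cards1.
    - by rewrite inE.
    - by move=> a; rewrite inE => /eqP ->; exact: connect0.
    - by move=> _; exact: oner_neq0.
    - by move=> a b; rewrite !inE => /eqP -> /eqP ->; rewrite (negbTE (eirr r)).
  have [S [f [cS rS0 conS fnz fS]]] := IH (ltnW hm).
  have [[i j] /= /and3P[iS jS eij]] :
      exists p : 'I_n * 'I_n, [&& p.1 \in S, p.2 \notin S & e p.1 p.2].
    apply/existsP; apply: contraT => /existsPn H.
    have cl : closed e (mem S).
      move=> x y exy.
      case xS: (x \in S); case yS: (y \in S) => //.
        by have := H (x, y); rewrite /= xS yS exy.
      by have := H (y, x); rewrite /= xS yS esym exy.
    have : ~: S != set0.
      have hc : (#|S| + #|~: S| = n)%N by rewrite cardsC; exact: card_ord.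
      rewrite -card_gt0; move: hc hm; rewrite cS; lia.
    case/set0Pn => y; rewrite inE => yS.
    by have := closed_connect cl (econ r y); rewrite rS0 (negbTE yS).
  have [psinz psiji] := hpsi i j eij.
  have key : forall k, k \in S -> e j k -> k != i ->
      psi j k = f k / (f i * psi i j).
    move=> k kS ejk kni.
    have ck : connect (rS S) k i.
      apply: connect_trans (_ : connect (rS S) k r) (conS i iS).
      by rewrite (sym_connect_sym (symS S)) conS.
    case/connectP: ck => p hp.
    case: (shortenP hp) => p' hp' up' _ ilast.
    have pS : all (mem S) p'.
      by apply: path_all_tgt hp' => a b /and3P[].
    have szp : (0 < size p')%N.
      by case: p' ilast {hp' up' pS} => //= ilast; move: kni; rewrite ilast eqxx.
    have dc : directed_cycle e (j :: k :: p').
      rewrite /directed_cycle /= ltnS ltnS szp /=.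
      idtac.
      move: up' => /= /andP[kp' up']. rewrite up' kp' andbT inE negb_or.
      have -> : j != k by apply: contraNneq jS => ->.
      have -> /= : j \notin p'.
        by apply: contra jS => jp; move/allP: pS => /(_ j jp).
      rewrite ejk rcons_path -ilast eij andbT /=.
      by apply: sub_path hp' => a b /and3P[].
    have := bal _ dc; rewrite cycle_gain_pp /= pp_rcons.
    rewrite (@pp_tele psi (rS S) f fnz _ k p' hp') => [h|]; last first.
      by move=> a b /and3P[eab aS bS]; apply: fS.
    rewrite -ilast in h; have fkn := fnz k; have fin := fnz i.
    have -> : psi j k = psi j k * (f i / f k * psi i j) * (f k / (f i * psi i j)).
      by field; rewrite fkn fin psinz.
    by rewrite h mul1r.
  pose f' a := if a == j then f i * psi i j else f a.
  have f'j : f' j = f i * psi i j by rewrite /f' eqxx.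
  have f'S a : a \in S -> f' a = f a.
    move=> aS; rewrite /f' ifN //; by apply: contraNneq jS => <-.
  exists (j |: S), f'; split.
  - by rewrite cardsU1 jS cS.
  - by rewrite !inE rS0 orbT.
  - have sub : subrel (rS S) (connect (rS (j |: S))).
      move=> a b /and3P[eab aS bS]; apply: connect1.
      by rewrite /= eab !inE aS bS !orbT.
    move=> a /setU1P [->|aS].
      apply: connect_trans (connect_sub sub (conS i iS)) (connect1 _).
      by rewrite /= eij !inE iS eqxx !orbT.
    exact: (connect_sub sub (conS a aS)).
  - move=> a; rewrite /f'; case: (a == j); last exact: fnz.
    by rewrite mulf_neq0 ?fnz.
  move=> a b /setU1P [->|aS] /setU1P [->|bS] eab.
  - by rewrite (negbTE (eirr j)) in eab.
  - rewrite f'j f'S //; case: (eqVneq b i) => [->|bni]; last exact: key.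
    rewrite psiji; have fin := fnz i; by field; rewrite fin psinz.
  - rewrite f'j f'S //; case: (eqVneq a i) => [->|ani].
      have fin := fnz i; by field; rewrite fin.
    have eja : e j a by rewrite esym.
    have [pja pinv] := hpsi j a eja.
    rewrite pinv key //; have fan := fnz a; have fin := fnz i.
    by field; rewrite fan fin psinz.
  - by rewrite !f'S //; exact: fS.
have hn : (n.-1 < n)%N by lia.
have [S [f [cS _ _ fnz fS]]] := main n.-1 hn.
have Sall a : a \in S.
  have hc : (#|S| + #|~: S| = n)%N by rewrite cardsC; exact: card_ord.
  have c0 : #|~: S| = 0%N by move: hc; rewrite cS; lia.
  apply: contraT => aS.
  by have := cards0_eq c0; move/setP => /(_ a); rewrite !inE aS.
exists f; split=> // a b eab; exact: fS.
Qed.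
End Pot.

Section Spec.
Variables (C : numClosedFieldType) (n : nat) (e : rel 'I_n) (phi : 'I_n -> 'I_n -> C).
Hypothesis (sg : simple_graph e) (tg : T_gain e phi).

Lemma vA_entry (v : 'rV[C]_n) j :
  (v *m gain_adj e phi) 0 j = \sum_i (if e i j then v 0 i * phi i j else 0).
Proof.
rewrite mxE; apply: eq_bigr => i _; rewrite mxE; by case: (e i j); rewrite ?mulr0.
Qed.

Lemma exists_max (F : 'I_n -> C) (x0 : 'I_n) :
  (forall x, F x \is Num.real) -> exists j, forall i, F i <= F j.
Proof.
move=> hF.
suff [j hj] : exists j, forall i, i \in enum 'I_n -> F i <= F j.
  by exists j => i; apply: hj; rewrite mem_enum.
elim: (enum 'I_n) => [|a s [j hj]]; first by exists x0.
case/orP: (real_leVge (hF a) (hF j)) => h.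
  exists j => i; rewrite inE => /predU1P [->|/hj] //.
exists a => i; rewrite inE => /predU1P [->|/hj hi] //.
exact: le_trans hi h.
Qed.

Lemma deg_sym j : #|[pred i | e i j]| = deg e j.
Proof. by apply: eq_card => i; rewrite !inE /= (proj1 sg). Qed.

Lemma deg_max j : (deg e j <= max_deg e)%N.
Proof. exact: (leq_bigmax j). Qed.

Section Vec.
Variables (v : 'rV[C]_n) (l : C) (M : C).
Hypothesis (hv : v *m gain_adj e phi = l *: v) (hM : forall i, `|v 0 i| <= M).

Let F j i := if e i j then v 0 i * phi i j else 0.

Lemma sumF j : \sum_i F j i = l * v 0 j.
Proof. by rewrite -vA_entry hv mxE. Qed.

Lemma normF j i : `|F j i| = if e i j then `|v 0 i| else 0.
Proof.
rewrite /F; case eij: (e i j); last by rewrite normr0.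
by rewrite normrM (proj1 (tg eij)) mulr1.
Qed.

Lemma sum_if_const j (c : C) :
  \sum_i (if e i j then c else 0) = (deg e j)%:R * c.
Proof. by rewrite -big_mkcond /= sumr_const -deg_sym mulr_natl. Qed.

Lemma local_bound j : `|l| * `|v 0 j| <= (deg e j)%:R * M.
Proof.
rewrite -normrM -sumF -sum_if_const.
apply: le_trans (ler_norm_sum _ _ _) _.
apply: ler_sum => i _; rewrite normF; by case: (e i j).
Qed.

Lemma local_eq j : `|l| = (max_deg e)%:R -> `|v 0 j| = M -> 0 < M ->
  deg e j = max_deg e /\
  forall i, e i j -> `|v 0 i| = M /\ v 0 i * phi i j * (max_deg e)%:R = l * v 0 j.
Proof.
move=> hl hj M0.
set D := max_deg e.
set a := `|\sum_i F j i|.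
set b := \sum_i `|F j i|.
set c := \sum_i (if e i j then M else 0).
have ha : a = `|l| * M by rewrite /a sumF normrM hj.
have hab : a <= b by apply: ler_norm_sum.
have hbc : b <= c by apply: ler_sum => i _; rewrite normF; case: (e i j).
have hc : c = (deg e j)%:R * M by rewrite /c sum_if_const.
have hcD : c <= D%:R * M.
  by rewrite hc; apply: ler_wpM2r; [exact: ltW | rewrite ler_nat deg_max].
have hDa : D%:R * M = a by rewrite ha hl.
have ebc : b = c.
  by apply/le_anti; rewrite hbc /=; apply: le_trans hcD _; rewrite hDa hab.
have eab : a = b.
  by apply/le_anti; rewrite hab /= ebc; apply: le_trans hcD _; rewrite hDa.
have ecD : c = D%:R * M by apply/le_anti; rewrite hcD /= hDa eab ebc.
have Mn0 : M != 0 by rewrite gt_eqF.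
split.
  apply/eqP; rewrite -(eqr_nat C); apply/eqP; apply: (mulIf Mn0).
  by rewrite -hc.
have hnb : forall i, e i j -> `|v 0 i| = M.
  have h0 : \sum_i ((if e i j then M else 0) - `|F j i|) = 0.
    by rewrite sumrB -/b -/c ebc subrr.
  have hpos : forall k : 'I_n, xpredT k ->
      0 <= (if e k j then M else 0) - `|F j k|.
    by move=> k _; rewrite normF; case: (e k j); rewrite ?subrr // subr_ge0.
  move=> i eij; have := psumr_eq0P hpos h0 (i:=i) isT.
  by rewrite normF eij => /eqP; rewrite subr_eq0 => /eqP.
move=> i eij; split; first exact: hnb.
have [t _ ht] := @normC_sum_eq C 'I_n xpredT (F j) eab.
have hi := ht i isT; rewrite normF eij hnb // /F eij in hi.
rewrite hi -sumF.
have -> : \sum_i F j i = \sum_i (`|F j i| * t).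
  by apply: eq_bigr => k _; apply: ht.
rewrite -mulr_suml -/b ebc ecD.
ring.
Qed.
End Vec.

Lemma max_vec (v : 'rV[C]_n) : v != 0 ->
  exists j, 0 < `|v 0 j| /\ forall i, `|v 0 i| <= `|v 0 j|.
Proof.
move=> vn0.
have [k hk] : exists k, v 0 k != 0.
  case: (pickP (fun k => v 0 k != 0)) => [k hk|h]; first by exists k.
  move: vn0; have -> : v = 0.
    by apply/rowP => k; rewrite mxE; move: (h k) => /negbFE/eqP.
  by rewrite eqxx.
have [j hj] := @exists_max (fun i => `|v 0 i|) k (fun x => normr_real _).
exists j; split => //.
by apply: lt_le_trans (hj k); rewrite normr_gt0.
Qed.

Lemma eig_bound l : eigenvalue (gain_adj e phi) l -> `|l| <= (max_deg e)%:R.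
Proof.
case/eigenvalueP => v hv vn0.
have [j [Mp hj]] := max_vec vn0.
have h := local_bound hv hj j.
have : `|l| * `|v 0 j| <= (max_deg e)%:R * `|v 0 j|.
  apply: le_trans h _; apply: ler_wpM2r; first exact: ltW.
  by rewrite ler_nat deg_max.
by rewrite ler_pM2r.
Qed.

Lemma forward : connected_graph e ->
  (exists2 l, eigenvalue (gain_adj e phi) l & `|l| = (max_deg e)%:R) ->
  regular e (max_deg e) /\
   (balanced e phi \/ balanced e (fun i j => - phi i j)).
Proof.
case=> n0 econ [l /eigenvalueP [v hv vn0] hl].
have [j0 [Mp hj]] := max_vec vn0.
set M := `|v 0 j0| in Mp hj.
have hS j (hj' : `|v 0 j| = M) := local_eq hv hj hl hj' Mp.
have cl : closed e (mem [pred j | `|v 0 j| == M]).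
  move=> x y exy; rewrite !inE /=.
  apply/eqP/eqP => h.
    by apply: ((hS x h).2 y _).1; rewrite (proj1 sg).
  exact: ((hS y h).2 x exy).1.
have allM j : `|v 0 j| = M.
  by have := closed_connect cl (econ j0 j); rewrite !inE /= eqxx => /esym/eqP.
have hE i j : e i j -> v 0 i * phi i j * (max_deg e)%:R = l * v 0 j.
  by move=> eij; exact: ((hS j (allM j)).2 i eij).2.
have vnz a : v 0 a != 0 by rewrite -normr_gt0 allM.
split; first by move=> j; exact: (hS j (allM j)).1.
case HD: (max_deg e) hE => [|d] hE.
  left; move=> [|x [|y s]] //= /and3P[_ _ /andP[exy _]].
  have := deg_max x; rewrite HD leqn0 /deg => /eqP /card0_eq /(_ y).
  by rewrite !inE /= exy.
set s := l / d.+1%:R.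
have hE' i j : e i j -> v 0 i * phi i j = s * v 0 j.
  move=> eij; have := hE i j eij; rewrite /s => h.
  have dn0 : d.+1%:R != 0 :> C by rewrite pnatr_eq0.
  apply: (mulIf dn0); rewrite h; field.
  by rewrite addrC natr1 pnatr_eq0.
have [k hk] : exists k, e j0 k.
  have := (hS j0 (erefl _)).1; rewrite HD /deg => hd.
  have : (0 < #|[pred j | e j0 j]|)%N by rewrite hd.
  by case/card_gt0P => k; rewrite inE /= => hk; exists k.
have hs : s ^+ 2 == 1.
  have hkj : e k j0 by rewrite (proj1 sg).
  have A := hE' j0 k hk; have B := hE' k j0 hkj.
  rewrite (proj2 (tg hk)) in B.
  have phn : phi j0 k != 0.
    apply/eqP => h; have := (tg hk).1; rewrite h normr0 => /eqP.
    by rewrite eq_sym oner_eq0.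
  have : s ^+ 2 * v 0 j0 = 1 * v 0 j0.
    rewrite mul1r expr2 -mulrA -B mulrA -A mulfK //.
  by move/(mulIf (vnz j0)) => ->.
move: hs; rewrite sqrf_eq1 => /orP [/eqP hs1|/eqP hs1].
  left; apply: (bal_of_pot (f := fun a => v 0 a)) => // a b eab.
  have := hE' a b eab; rewrite hs1 mul1r => <-.
  by field; rewrite vnz.
right; apply: (bal_of_pot (f := fun a => v 0 a)) => // a b eab.
have := hE' a b eab; rewrite hs1 mulN1r => /eqP; rewrite -eqr_oppLR => /eqP <-.
by field; rewrite vnz.
Qed.

Lemma backward : connected_graph e -> regular e (max_deg e) ->
  (balanced e phi \/ balanced e (fun i j => - phi i j)) ->
  exists2 l, eigenvalue (gain_adj e phi) l & `|l| = (max_deg e)%:R.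
Proof.
move=> cg hr hb.
have phn a b : e a b -> phi a b != 0.
  move=> eab; apply/eqP => h; have := (tg eab).1; rewrite h normr0 => /eqP.
  by rewrite eq_sym oner_eq0.
have key : forall s : C, (s = 1 \/ s = -1) ->
    balanced e (fun i j => s * phi i j) ->
    exists2 l, eigenvalue (gain_adj e phi) l & `|l| = (max_deg e)%:R.
  move=> s hs bs.
  have hpsi a b : e a b -> s * phi a b != 0 /\ s * phi b a = (s * phi a b)^-1.
    move=> eab; rewrite (proj2 (tg eab)).
    by case: hs => ->; rewrite ?mul1r ?mulN1r ?invrN ?oppr_eq0 phn.
  have [f [fnz hf]] := pot_of_bal sg cg hpsi bs.
  exists (s * (max_deg e)%:R); last first.
    by rewrite normrM normr_nat; case: hs => ->; rewrite ?normrN normr1 mul1r.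
  apply/eigenvalueP; exists (\row_i f i).
    apply/rowP => j; rewrite vA_entry !mxE.
    have term i : e i j -> (\row_i f i) 0 i * phi i j = s * f j.
      move=> eij; have := hf i j eij; rewrite mxE => h.
      have fin := fnz i.
      case: hs h => -> h.
        by rewrite mul1r in h; rewrite h mul1r; field.
      rewrite mulN1r in h; rewrite -[phi i j]opprK h mulN1r; field; exact: fin.
    rewrite (eq_bigr (fun i => if e i j then s * f j else 0)); last first.
      by move=> i _; case eij: (e i j) => //; rewrite term.
    rewrite sum_if_const hr; ring.
  case cg => n0 _; apply/eqP => /rowP /(_ (Ordinal n0)); rewrite !mxE.
  exact/eqP/fnz.
case: hb => hb.
  apply: (key 1); first by left.
  move=> c hc; rewrite /cycle_gain; under eq_bigr do rewrite mul1r.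
  exact: hb c hc.
apply: (key (-1)); first by right.
move=> c hc; rewrite /cycle_gain; under eq_bigr do rewrite mulN1r.
exact: hb c hc.
Qed.

End Spec.


Theorem theorem5p3 (C : numClosedFieldType) (n : nat) (e : rel 'I_n)
  (phi : 'I_n -> 'I_n -> C) :
  simple_graph e -> connected_graph e -> T_gain e phi ->
  spectral_radius_is (gain_adj e phi) (max_deg e)%:R <->
  (regular e (max_deg e) /\
   (balanced e phi \/ balanced e (fun i j => - phi i j))).
Proof.
move=> sg cg tg; split.
  by case=> hex _; exact: forward sg tg cg hex.
case=> hr hb; split; first exact: backward sg tg cg hr hb.
by move=> l hl; apply: (eig_bound sg tg hl).
Qed.
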